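(* Let $G$ be a discrete group acting effectively on a mixing Smale space $(X,\varphi)$. Then there exists a nonempty finite set $P$ of periodic points of $\varphi$ with $\varphi(P)=P$ such that $gp\in P$ for every $g\in G$ and every $p\in P$.
   Context: A Smale space $(X,\varphi)$ is an infinite compact metric space with a homeomorphism $\varphi$ admitting a local product structure (a bracket map $[\cdot,\cdot]$ defined for nearby points with $[x,x]=x$, $[x,[y,z]]=[x,z]$, $[[x,y],z]=[x,z]$, $\varphi[x,y]=[\varphi x,\varphi y]$, with $\varphi$ uniformly contracting on stable local sets $\{[x,y]=y\}$ and $\varphi^{-1}$ uniformly contracting on unstable local sets $\{[x,y]=x\}$). Mixing: for all nonempty open $U,V$ there is $N$ with $\varphi^n(U)\cap V\neq\emptyset$ for all $n\geq N$. A point $x$ is periodic if $\varphi^k(x)=x$ for some $k\ge1$. An action of $G$ on $(X,\varphi)$ is a homomorphism $G\to\mathrm{Homeo}(X)$ with $g\varphi(x)=\varphi(gx)$; effective means every $g\neq e$ moves some point. *)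

(* Defs.v *)
From Stdlib Require Import Reals List.
Open Scope R_scope.

Section Defs.
Context {X : Type} (d : X -> X -> R).

Definition is_metric : Prop :=
  (forall x y, 0 <= d x y) /\
  (forall x y, d x y = 0 <-> x = y) /\
  (forall x y, d x y = d y x) /\
  (forall x y z, d x z <= d x y + d y z).

Definition is_open (U : X -> Prop) : Prop :=
  forall x, U x -> exists r, 0 < r /\ forall y, d x y < r -> U y.

Definition is_compact : Prop :=
  forall (I : Type) (U : I -> X -> Prop),
    (forall i, is_open (U i)) -> (forall x, exists i, U i x) ->
    exists l : list I, forall x, exists i, In i l /\ U i x.

Definition continuous_map (f : X -> X) : Prop :=
  forall x e, 0 < e -> exists del, 0 < del /\
    forall y, d x y < del -> d (f x) (f y) < e.

Definition is_homeomorphism (f : X -> X) : Prop :=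
  continuous_map f /\
  exists g : X -> X, (forall x, g (f x) = x) /\ (forall x, f (g x) = x) /\
    continuous_map g.

(* Smale space (Ruelle / Putnam): bracket defined on {(x,y) | d x y <= eps},
   represented by a total function only constrained on that domain. *)
Definition bracket_axioms (phi phii : X -> X) (eps lam : R) (br : X -> X -> X) : Prop :=
  (forall x y e, d x y <= eps -> 0 < e -> exists del, 0 < del /\
     forall x' y', d x' y' <= eps -> d x x' < del -> d y y' < del ->
       d (br x y) (br x' y') < e) /\
  (forall x, br x x = x) /\
  (forall x y z, d y z <= eps -> d x (br y z) <= eps -> d x z <= eps ->
     br x (br y z) = br x z) /\
  (forall x y z, d x y <= eps -> d (br x y) z <= eps -> d x z <= eps ->
     br (br x y) z = br x z) /\
  (forall x y, d x y <= eps -> d (phi x) (phi y) <= eps ->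
     phi (br x y) = br (phi x) (phi y)) /\
  (* phi contracts local stable sets *)
  (forall x y, d x y <= eps -> br x y = y -> d (phi x) (phi y) <= lam * d x y) /\
  (* phi^{-1} contracts local unstable sets *)
  (forall x y, d x y <= eps -> br x y = x -> d (phii x) (phii y) <= lam * d x y).

Definition infinite_type : Prop := ~ exists l : list X, forall x, In x l.

Definition is_smale_space (phi : X -> X) : Prop :=
  is_metric /\ is_compact /\ infinite_type /\ continuous_map phi /\
  exists phii : X -> X,
    (forall x, phii (phi x) = x) /\ (forall x, phi (phii x) = x) /\
    continuous_map phii /\
    exists (eps lam : R) (br : X -> X -> X),
      0 < eps /\ 0 < lam < 1 /\ bracket_axioms phi phii eps lam br.

Definition is_mixing (phi : X -> X) : Prop :=
  forall U V : X -> Prop, is_open U -> is_open V ->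
    (exists x, U x) -> (exists y, V y) ->
    exists N : nat, forall n : nat, (N <= n)%nat ->
      exists x, U x /\ V (Nat.iter n phi x).

Definition is_periodic (phi : X -> X) (x : X) : Prop :=
  exists k : nat, (1 <= k)%nat /\ Nat.iter k phi x = x.

End Defs.

Definition is_group {G : Type} (mul : G -> G -> G) (e : G) (inv : G -> G) : Prop :=
  (forall a b c, mul a (mul b c) = mul (mul a b) c) /\
  (forall a, mul e a = a) /\ (forall a, mul a e = a) /\
  (forall a, mul (inv a) a = e) /\ (forall a, mul a (inv a) = e).

Definition is_action {G X : Type} (d : X -> X -> R) (phi : X -> X)
  (mul : G -> G -> G) (e : G) (act : G -> X -> X) : Prop :=
  (forall g, is_homeomorphism d (act g)) /\
  (forall x, act e x = x) /\
  (forall g h x, act (mul g h) x = act g (act h x)) /\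
  (forall g x, act g (phi x) = phi (act g x)).

Definition is_effective {G X : Type} (e : G) (act : G -> X -> X) : Prop :=
  forall g, g <> e -> exists x, act g x <> x.

(* Main.v *)
Require Import Defs.
From Stdlib Require Import Reals List Lra Lia Classical ClassicalEpsilon Arith.
Open Scope R_scope.

Lemma le_of_all v w : (forall r, 0 < r -> v < w + r) -> v <= w.
Proof. intros H. destruct (Rle_dec v w) as [h|h]; auto. exfalso.
  specialize (H (v - w)). lra. Qed.

Fixpoint minl (l : list R) : R := match l with nil => 1 | r :: l => Rmin r (minl l) end.
Lemma minl_pos l : (forall r, In r l -> 0 < r) -> 0 < minl l.
Proof. induction l; simpl; intros H. lra. apply Rmin_glb_lt; auto. Qed.
Lemma minl_le l r : In r l -> minl l <= r.
Proof. induction l; simpl; intros H. contradiction. destruct H as [<-|H].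
  apply Rmin_l. eapply Rle_trans. apply Rmin_r. auto. Qed.
Fixpoint maxl (l : list nat) : nat := match l with nil => 0%nat | r :: l => Nat.max r (maxl l) end.
Lemma maxl_le l r : In r l -> (r <= maxl l)%nat.
Proof. induction l; simpl; intros H. contradiction. destruct H as [<-|H]; lia || (specialize (IHl H); lia). Qed.

Lemma iterS {A} n (f : A -> A) x : Nat.iter (S n) f x = f (Nat.iter n f x).
Proof. reflexivity. Qed.

Section Met.
Context {T : Type} (d : T -> T -> R) (Hm : is_metric d).
Lemma dpos x y : 0 <= d x y. Proof. destruct Hm as [H _]; apply H. Qed.
Lemma dxx x : d x x = 0. Proof. destruct Hm as [_ [H _]]; apply H; reflexivity. Qed.
Lemma deq x y : d x y = 0 -> x = y. Proof. destruct Hm as [_ [H _]]; apply H. Qed.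
Lemma dsym x y : d x y = d y x. Proof. destruct Hm as [_ [_ [H _]]]; apply H. Qed.
Lemma dtri x y z : d x z <= d x y + d y z. Proof. destruct Hm as [_ [_ [_ H]]]; apply H. Qed.
Lemma ball_open x r : is_open d (fun y => d x y < r).
Proof. intros y Hy. exists (r - d x y). split. lra. intros z Hz. pose proof (dtri x y z). lra. Qed.

Lemma cont_iter f : continuous_map d f -> forall n, continuous_map d (Nat.iter n f).
Proof. intros Hf n; induction n.
 - intros x e He; exists e; split; auto.
 - intros x e He. destruct (Hf (Nat.iter n f x) e He) as [d1 [Hd1 H1]].
   destruct (IHn x d1 Hd1) as [d2 [Hd2 H2]]. exists d2. split; auto.
   intros y Hy. rewrite !iterS. auto. Qed.

Lemma cluster (Hc : is_compact d) (a : nat -> T) :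
  exists u, forall r, 0 < r -> forall M, exists k, (M <= k)%nat /\ d u (a k) < r.
Proof.
 apply NNPP; intro Hn.
 set (I := {u : T & {r : R & {M : nat | 0 < r /\ forall k, (M <= k)%nat -> r <= d u (a k)}}}).
 set (U := fun (i : I) (y : T) => d (projT1 i) y < projT1 (projT2 i)).
 destruct (Hc I U) as [l Hl].
 - intros i; apply ball_open.
 - intros y.
   assert (Hy : exists r, 0 < r /\ exists M, forall k, (M <= k)%nat -> r <= d y (a k)).
   { apply NNPP; intro H2; apply Hn; exists y; intros r Hr M. apply NNPP; intro H3. apply H2.
     exists r; split; auto. exists M. intros k Hk. apply Rnot_lt_le. intro H4. apply H3. exists k; auto. }
   destruct Hy as [r [Hr [M HM]]].
   exists (existT _ y (existT _ r (exist _ M (conj Hr HM)))). unfold U; simpl. rewrite dxx; auto.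
 - set (Ms := maxl (map (fun i : I => proj1_sig (projT2 (projT2 i))) l)).
   destruct (Hl (a Ms)) as [i [Hin HU]]. unfold U in HU.
   assert (HMs : (proj1_sig (projT2 (projT2 i)) <= Ms)%nat).
   { unfold Ms. apply maxl_le. apply (in_map (fun i : I => proj1_sig (projT2 (projT2 i)))) in Hin. exact Hin. }
   destruct (proj2_sig (projT2 (projT2 i))) as [_ HM].
   specialize (HM Ms HMs). lra.
Qed.

Lemma unif_bracket (Hc : is_compact d) (br : T -> T -> T) (eps : R) (Heps : 0 < eps)
  (Hcont : forall x e, 0 < e -> exists del, 0 < del /\ forall a b, d a b <= eps -> d x a < del -> d x b < del -> d x (br a b) < e) :
  forall eta, 0 < eta -> exists del, 0 < del /\ del <= eps /\ forall a b, d a b < del -> d a (br a b) < eta.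
Proof.
 intros eta Heta.
 set (I := {x : T & {del : R | 0 < del /\ del <= eta /\ del <= eps /\ forall a b, d a b <= eps -> d x a < del -> d x b < del -> d x (br a b) < eta/2}}).
 set (U := fun (i : I) (y : T) => d (projT1 i) y < proj1_sig (projT2 i) / 2).
 destruct (Hc I U) as [l Hl].
 - intros i; apply ball_open.
 - intros y. destruct (Hcont y (eta/2)) as [del [Hdel H]]. lra.
   set (del' := Rmin del (Rmin eta eps)).
   assert (H1 : 0 < del'). { unfold del'. repeat apply Rmin_glb_lt; lra. }
   assert (H2 : del' <= eta). { unfold del'. eapply Rle_trans; [apply Rmin_r|apply Rmin_l]. }
   assert (H3 : del' <= eps). { unfold del'. eapply Rle_trans; [apply Rmin_r|apply Rmin_r]. }
   assert (H4 : del' <= del) by apply Rmin_l.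
   assert (H5 : forall a b, d a b <= eps -> d y a < del' -> d y b < del' -> d y (br a b) < eta/2).
   { intros a b Ha Hb Hb'. apply H; auto; lra. }
   exists (existT _ y (exist _ del' (conj H1 (conj H2 (conj H3 H5))))). unfold U; simpl. rewrite dxx; lra.
 - set (dl := map (fun i : I => proj1_sig (projT2 i) / 2) l).
   assert (Hpos : 0 < minl dl).
   { apply minl_pos. unfold dl. intros r Hr. apply in_map_iff in Hr. destruct Hr as [i [Hi _]]. rewrite <- Hi. destruct (proj2_sig (projT2 i)) as [Hd _]. lra. }
   exists (Rmin (minl dl) eps). split. apply Rmin_glb_lt; lra. split. apply Rmin_r.
   intros a b Hab. destruct (Hl a) as [i [Hin HU]]. unfold U in HU.
   assert (Hle : minl dl <= proj1_sig (projT2 i)/2).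
   { apply minl_le. unfold dl. apply (in_map (fun i : I => proj1_sig (projT2 i) / 2)) in Hin. exact Hin. }
   revert HU Hle. destruct i as [x [del [Hd [Hde [Hdeps Hx]]]]]. simpl. intros HU Hle.
   pose proof (Rmin_l (minl dl) eps). pose proof (Rmin_r (minl dl) eps).
   assert (Hb : d x b < del). { pose proof (dtri x a b). lra. }
   assert (Hx' := Hx a b ltac:(lra) ltac:(lra) Hb).
   pose proof (dtri a x (br a b)). rewrite (dsym a x) in *. lra.
Qed.
End Met.

Lemma powle1 x n : 0 <= x <= 1 -> 0 <= x ^ n <= 1.
Proof. intros Hx; induction n; simpl; nra. Qed.

Record SS {T} (d : T->T->R) (f g : T->T) (eps lam : R) (br : T->T->T) : Prop := {
 ss_met : is_metric d; ss_cpt : is_compact d; ss_fc : continuous_map d f; ss_gc : continuous_map d g;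
 ss_gf : forall x, g (f x) = x; ss_fg : forall x, f (g x) = x;
 ss_eps : 0 < eps; ss_lam : 0 < lam < 1; ss_br : bracket_axioms d f g eps lam br }.

Lemma SS_dual {T} d f g eps lam (br : T -> T -> T) :
  SS d f g eps lam br -> SS d g f eps lam (fun a b => br b a).
Proof.
 intros H. destruct H as [Hm Hc Hf Hg Hgf Hfg He Hl [B1 [B2 [B3 [B4 [B5 [B6 B7]]]]]]].
 split; auto. split; [|split;[|split;[|split;[|split;[|split]]]]].
 - intros x y e Hxy Hee. rewrite (dsym d Hm) in Hxy. destruct (B1 y x e Hxy Hee) as [del [Hd H]].
   exists del; split; auto. intros x' y' H1 H2 H3. apply H; auto. rewrite (dsym d Hm); auto.
 - auto.
 - intros x y z H1 H2 H3. apply B4; rewrite (dsym d Hm); auto.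
 - intros x y z H1 H2 H3. apply B3; try rewrite (dsym d Hm); auto.
 - intros x y H1 H2. rewrite <- (Hgf (br (g y) (g x))). f_equal.
   transitivity (br (f (g y)) (f (g x))). rewrite !Hfg; auto. symmetry; apply B5.
   rewrite (dsym d Hm); auto. rewrite !Hfg. rewrite (dsym d Hm); auto.
 - intros x y H1 H2. rewrite (dsym d Hm (g x)), (dsym d Hm x). apply B7; auto. rewrite (dsym d Hm); auto.
 - intros x y H1 H2. rewrite (dsym d Hm (f x)), (dsym d Hm x). apply B6; auto. rewrite (dsym d Hm); auto.
Qed.

Lemma iter_cancel {A} (f g : A->A) (Hfg : forall x, f (g x) = x) :
  forall i k z, (i <= k)%nat -> Nat.iter i f (Nat.iter k g z) = Nat.iter (k - i) g z.
Proof.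
 induction i; intros k z Hik. simpl. rewrite Nat.sub_0_r; auto.
 rewrite iterS, IHi by lia. replace (k - i)%nat with (S (k - S i)) by lia. rewrite iterS. auto.
Qed.

Lemma decay lam v C : 0 < lam < 1 -> 0 <= v -> (forall k, v <= lam ^ k * C) -> v = 0.
Proof.
 intros Hl Hv H. destruct (Req_dec v 0) as [|Hne]; auto. exfalso.
 assert (HC : 0 <= C). { specialize (H 0%nat). simpl in H. lra. }
 destruct (pow_lt_1_zero lam ltac:(rewrite Rabs_right; lra) (v / (C+1))) as [N HN].
 { apply Rdiv_lt_0_compat; lra. }
 specialize (HN N (le_n N)). rewrite Rabs_right in HN by (apply Rle_ge, pow_le; lra).
 assert (Hp : 0 <= lam ^ N) by (apply pow_le; lra).
 assert (H2 : lam ^ N * (C+1) < v / (C+1) * (C+1)) by (apply Rmult_lt_compat_r; lra).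
 replace (v / (C+1) * (C+1)) with v in H2 by (field; lra).
 specialize (H N). nra.
Qed.

Section SSL.
Context {T : Type} {d : T -> T -> R} {f g : T -> T} {eps lam : R} {br : T -> T -> T}
  (H : SS d f g eps lam br).

Lemma stable_iter k a b : d a b <= eps -> br a b = b ->
  d (Nat.iter k f a) (Nat.iter k f b) <= lam ^ k * d a b /\
  br (Nat.iter k f a) (Nat.iter k f b) = Nat.iter k f b.
Proof.
 destruct H as [Hm Hc Hf Hg Hgf Hfg He Hl [B1 [B2 [B3 [B4 [B5 [B6 B7]]]]]]].
 intros Hab Hb. induction k.
 - simpl. split; [lra|auto].
 - destruct IHk as [I1 I2]. rewrite !iterS.
   assert (Hp : lam ^ k <= 1) by (apply powle1; lra).
   assert (Hd0 := dpos d Hm a b).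
   assert (Hk : d (Nat.iter k f a) (Nat.iter k f b) <= eps) by nra.
   assert (Hs := B6 _ _ Hk I2).
   split. simpl. eapply Rle_trans. apply Hs. rewrite Rmult_assoc. apply Rmult_le_compat_l; lra.
   rewrite <- B5; auto. rewrite I2; auto. nra.
Qed.

Lemma comm_iter k a b : (forall i, (i <= k)%nat -> d (Nat.iter i f a) (Nat.iter i f b) <= eps) ->
  Nat.iter k f (br a b) = br (Nat.iter k f a) (Nat.iter k f b).
Proof.
 destruct H as [Hm Hc Hf Hg Hgf Hfg He Hl [B1 [B2 [B3 [B4 [B5 [B6 B7]]]]]]].
 induction k; intros Hc'. reflexivity.
 rewrite !iterS, IHk by auto. apply B5. apply (Hc' k); lia. rewrite <- !iterS. apply Hc'; lia.
Qed.

Lemma UB eta : 0 < eta -> exists del, 0 < del /\ del <= eps /\ forall a b, d a b < del -> d a (br a b) < eta.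
Proof.
 destruct H as [Hm Hc Hf Hg Hgf Hfg He Hl [B1 [B2 [B3 [B4 [B5 [B6 B7]]]]]]].
 apply (unif_bracket d Hm Hc br eps He).
 intros x e Hee. destruct (B1 x x e) as [del [Hd Hx]]; auto. rewrite dxx; auto; lra.
 exists del; split; auto. intros a b Hab H1 H2. rewrite <- (B2 x). apply Hx; auto.
Qed.
End SSL.

Lemma expansive {T d f g eps lam br} (H : @SS T d f g eps lam br) :
  exists c, 0 < c /\ forall p q, (forall j, d (Nat.iter j f p) (Nat.iter j f q) < c) ->
    (forall j, d (Nat.iter j g p) (Nat.iter j g q) < c) -> p = q.
Proof.
 pose proof H as H'. destruct H' as [Hm Hc Hf Hg Hgf Hfg He Hl [B1 [B2 [B3 [B4 [B5 [B6 B7]]]]]]].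
 pose proof (SS_dual _ _ _ _ _ _ H) as Hd.
 destruct (UB H (eps/2)) as [del [Hdel [Hdle Hub]]]. lra.
 exists (Rmin del (eps/2)). split. apply Rmin_glb_lt; lra.
 intros p q Hfw Hbw.
 pose proof (Rmin_l del (eps/2)); pose proof (Rmin_r del (eps/2)).
 assert (E1 : d p (br p q) = 0).
 { apply (decay lam _ eps Hl (dpos d Hm _ _)). intros k.
   set (a := Nat.iter k g p). set (b := Nat.iter k g q).
   assert (Hab : d a b < Rmin del (eps/2)) by apply Hbw.
   assert (Hcm : Nat.iter k f (br a b) = br p q).
   { rewrite (comm_iter H). unfold a, b. rewrite !(iter_cancel f g Hfg k k) by lia. rewrite Nat.sub_diag. reflexivity.
     intros i Hi. unfold a, b. rewrite !(iter_cancel f g Hfg i k) by lia. specialize (Hbw (k-i)%nat). lra. }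
   assert (Hz : d a (br a b) < eps/2) by (apply Hub; lra).
   assert (Hz2 : br a (br a b) = br a b) by (apply B3; lra).
   destruct (stable_iter H k a (br a b)) as [S1 _]; [lra|exact Hz2|].
   assert (Ha : Nat.iter k f a = p) by (unfold a; rewrite (iter_cancel f g Hfg k k) by lia; rewrite Nat.sub_diag; reflexivity).
   rewrite Hcm, Ha in S1.
   eapply Rle_trans. apply S1. apply Rmult_le_compat_l. apply pow_le; lra. lra. }
 assert (E2 : d q (br p q) = 0).
 { apply (decay lam _ eps Hl (dpos d Hm _ _)). intros k.
   set (a := Nat.iter k f p). set (b := Nat.iter k f q).
   assert (Hab : d a b < Rmin del (eps/2)) by apply Hfw.
   assert (Hcm : Nat.iter k g (br a b) = br p q).
   { pose proof (comm_iter Hd k b a) as C. cbv beta in C. rewrite C.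
     unfold a, b. rewrite !(iter_cancel g f Hgf k k) by lia. rewrite Nat.sub_diag. reflexivity.
     intros i Hi. unfold a, b. rewrite !(iter_cancel g f Hgf i k) by lia. specialize (Hfw (k-i)%nat).
     rewrite (dsym d Hm). lra. }
   assert (Hz : d a (br a b) < eps/2) by (apply Hub; lra).
   assert (Hzb : d (br a b) b <= eps).
   { pose proof (dtri d Hm (br a b) a b). rewrite (dsym d Hm (br a b) a) in H2. lra. }
   assert (Hz2 : br (br a b) b = br a b) by (apply B4; lra).
   destruct (stable_iter Hd k b (br a b)) as [S1 _]; try (rewrite (dsym d Hm); lra); auto.
   assert (Hb : Nat.iter k g b = q) by (unfold b; rewrite (iter_cancel g f Hgf k k) by lia; rewrite Nat.sub_diag; reflexivity).
   rewrite Hcm, Hb in S1.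
   eapply Rle_trans. apply S1. apply Rmult_le_compat_l. apply pow_le; lra. rewrite (dsym d Hm). lra. }
 apply (deq d Hm) in E1. apply (deq d Hm) in E2. congruence.
Qed.

Fixpoint aseq {T} (br : T->T->T) (f : T->T) (N : nat) (x : T) (k : nat) : T :=
  match k with O => x | S k => br x (Nat.iter N f (aseq br f N x k)) end.

Lemma back_half {T d f g eps lam br} (H : @SS T d f g eps lam br) (eta del0 : R) (N : nat) (x : T) :
  0 < eta -> 0 < del0 -> del0 <= eta -> 2 * eta <= eps ->
  (forall a b, d a b < del0 -> d a (br a b) < eta) ->
  (1 <= N)%nat -> lam ^ N <= 1/2 -> lam ^ N * eta < del0 / 2 ->
  d x (Nat.iter N f x) < del0 / 2 ->
  exists u, d x u <= eta /\ forall j, d (Nat.iter j g u) (Nat.iter (j mod N) g (Nat.iter N f x)) <= 7 * eta + del0 / 2.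
Proof.
 intros Heta Hd0 Hd0e H2e Hub HN HlN HlNe Hxy.
 pose proof H as H'. destruct H' as [Hm Hc Hf Hg Hgf Hfg He Hl [B1 [B2 [B3 [B4 [B5 [B6 B7]]]]]]].
 pose proof (SS_dual _ _ _ _ _ _ H) as Hd.
 set (y := Nat.iter N f x) in *. set (a := aseq br f N x).
 assert (HpN : 0 <= lam ^ N) by (apply pow_le; lra).
 assert (Inv : forall k, d x (a k) < eta /\ br x (a k) = a k).
 { induction k.
   - simpl. rewrite (dxx d Hm). split; [lra|apply B2].
   - destruct IHk as [I1 I2].
     change (a (S k)) with (br x (Nat.iter N f (a k))).
     set (w := Nat.iter N f (a k)).
     destruct (stable_iter H N x (a k)) as [S1 _]; [lra|auto|].
     assert (Hw : d x w < del0).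
     { pose proof (dtri d Hm x y w). fold y in S1. assert (lam ^ N * d x (a k) <= lam ^ N * eta) by
        (apply Rmult_le_compat_l; lra). unfold w in *. lra. }
     assert (Hbx := Hub x w Hw). split; auto. apply B3; lra. }
 assert (Hw : forall k, d x (Nat.iter N f (a k)) < del0).
 { intros k. destruct (Inv k) as [I1 I2]. destruct (stable_iter H N x (a k)) as [S1 _]; [lra|auto|].
   pose proof (dtri d Hm x y (Nat.iter N f (a k))). fold y in S1.
   assert (lam ^ N * d x (a k) <= lam ^ N * eta) by (apply Rmult_le_compat_l; lra). lra. }
 assert (Rel : forall k, br (a (S k)) (Nat.iter N f (a k)) = a (S k) /\ d (a (S k)) (Nat.iter N f (a k)) <= 2 * eta).
 { intros k. change (a (S k)) with (br x (Nat.iter N f (a k))).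
   set (w := Nat.iter N f (a k)). assert (Hwk := Hw k). fold w in Hwk. assert (Hbx := Hub x w Hwk).
   assert (d (br x w) w <= 2 * eta).
   { pose proof (dtri d Hm (br x w) x w). rewrite (dsym d Hm (br x w) x) in H0. lra. }
   split; auto. apply B4; lra. }
 set (K := 7 * eta + del0 / 2).
 set (tb := fun j => Nat.iter (j mod N) g y).
 assert (Q : forall k j, (j <= k * N)%nat -> d (Nat.iter j g (a k)) (tb j) <= K - 4 * eta * lam ^ j).
 { induction k; intros j Hj.
   - assert (j = 0%nat) by lia. subst j. unfold tb. rewrite Nat.Div0.mod_0_l. simpl. unfold K. change (a 0%nat) with x. lra.
   - set (A := a (S k)). set (w := Nat.iter N f (a k)).
     destruct (Rel k) as [R1 R2]. fold A w in R1, R2.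
     destruct (stable_iter Hd j w A) as [S1 _]; [rewrite (dsym d Hm); lra|exact R1|].
     assert (Hpj : 0 <= lam ^ j <= 1) by (apply powle1; lra).
     assert (S2 : d (Nat.iter j g A) (Nat.iter j g w) <= 2 * eta * lam ^ j).
     { rewrite (dsym d Hm). eapply Rle_trans. apply S1. rewrite (dsym d Hm). nra. }
     destruct (Inv k) as [I1 I2].
     destruct (lt_eq_lt_dec j N) as [[Hlt|Heq]|Hgt].
     + assert (E1 : Nat.iter j g w = Nat.iter (N - j) f (a k)) by (unfold w; apply iter_cancel; auto; lia).
       assert (E2 : tb j = Nat.iter (N - j) f x).
       { unfold tb. rewrite Nat.mod_small by lia. unfold y. apply iter_cancel; auto; lia. }
       destruct (stable_iter H (N - j) x (a k)) as [S3 _]; [lra|auto|].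
       assert (Hq : 0 <= lam ^ (N - j) <= 1) by (apply powle1; lra).
       assert (S4 : d (Nat.iter (N - j) f x) (Nat.iter (N - j) f (a k)) <= eta).
       { eapply Rle_trans. apply S3. pose proof (dpos d Hm x (a k)). nra. }
       pose proof (dtri d Hm (Nat.iter j g A) (Nat.iter j g w) (tb j)).
       rewrite E1, E2 in *. rewrite (dsym d Hm (Nat.iter (N - j) f (a k))) in H0. unfold K. nra.
     + subst j. assert (E1 : Nat.iter N g w = a k).
       { unfold w. rewrite iter_cancel by (auto; lia). rewrite Nat.sub_diag. reflexivity. }
       assert (E2 : tb N = y). { unfold tb. rewrite Nat.Div0.mod_same. reflexivity. }
       pose proof (dtri d Hm (Nat.iter N g A) (Nat.iter N g w) (tb N)).
       pose proof (dtri d Hm (a k) x y).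
       rewrite E1, E2 in *. rewrite (dsym d Hm (a k) x) in H1. unfold K. nra.
     + set (i := (j - N)%nat). assert (Hji : j = (i + N)%nat) by (unfold i; lia).
       assert (E1 : Nat.iter j g w = Nat.iter i g (a k)).
       { rewrite Hji, Nat.iter_add. unfold w. rewrite (iter_cancel g f Hgf N N) by lia. rewrite Nat.sub_diag. reflexivity. }
       assert (E2 : tb j = tb i).
       { unfold tb. rewrite Hji. replace (i + N)%nat with (i + 1 * N)%nat by lia. rewrite Nat.Div0.mod_add. reflexivity. }
       assert (IH := IHk i ltac:(simpl in Hj; lia)).
       assert (Hpi : 0 <= lam ^ i <= 1) by (apply powle1; lra).
       assert (Hpw : lam ^ j = lam ^ i * lam ^ N) by (rewrite Hji, pow_add; reflexivity).
       pose proof (dtri d Hm (Nat.iter j g A) (Nat.iter j g w) (tb j)).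
       rewrite E1, E2 in *. rewrite Hpw in *.
       assert (lam ^ i * lam ^ N <= lam ^ i * (1/2)) by (apply Rmult_le_compat_l; lra).
       nra. }
 destruct (cluster d Hm Hc a) as [u Hu].
 exists u. split.
 - apply le_of_all. intros r Hr. destruct (Hu r Hr 0%nat) as [k [_ Hk]].
   destruct (Inv k) as [I1 _]. pose proof (dtri d Hm x (a k) u). rewrite (dsym d Hm (a k) u) in H0. lra.
 - intros j. apply le_of_all. intros e He'.
   destruct (cont_iter d g Hg j u e He') as [r [Hr Hcu]].
   destruct (Hu r Hr j) as [k [Hk1 Hk2]].
   assert (Hq := Q k j ltac:(nia)).
   assert (Hpj : 0 <= lam ^ j) by (apply pow_le; lra).
   pose proof (Hcu _ Hk2).
   pose proof (dtri d Hm (Nat.iter j g u) (Nat.iter j g (a k)) (tb j)). fold y. fold (tb j).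
   assert (0 <= eta * lam ^ j) by nra. unfold K in *. lra.
Qed.

Lemma exists_periodic {T d f g eps lam br} (H : @SS T d f g eps lam br) (x0 : T) :
  is_mixing d f -> exists p N, (1 <= N)%nat /\ Nat.iter N f p = p.
Proof.
 intros Hmix.
 pose proof H as H'. destruct H' as [Hm Hc Hf Hg Hgf Hfg He Hl [B1 [B2 [B3 [B4 [B5 [B6 B7]]]]]]].
 pose proof (SS_dual _ _ _ _ _ _ H) as Hd.
 destruct (expansive H) as [c [Hcp Hexp]].
 set (e1 := Rmin (eps/4) (c/10)).
 assert (He1 : 0 < e1) by (apply Rmin_glb_lt; lra).
 assert (He1a := Rmin_l (eps/4) (c/10)). assert (He1b := Rmin_r (eps/4) (c/10)). fold e1 in He1a, He1b.
 destruct (UB H e1 He1) as [d2' [Hd2' [_ Hub2]]].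
 set (d2 := Rmin d2' e1).
 assert (Hd2 : 0 < d2) by (apply Rmin_glb_lt; lra).
 assert (Hd2a := Rmin_l d2' e1). assert (Hd2b := Rmin_r d2' e1). fold d2 in Hd2a, Hd2b.
 set (e2 := Rmin (d2/4) (c/100)).
 assert (He2 : 0 < e2) by (apply Rmin_glb_lt; lra).
 assert (He2a := Rmin_l (d2/4) (c/100)). assert (He2b := Rmin_r (d2/4) (c/100)). fold e2 in He2a, He2b.
 destruct (UB H e2 He2) as [da [Hda [_ Huba]]].
 destruct (UB Hd e2 He2) as [db [Hdb [_ Hubb]]].
 set (d0 := Rmin (Rmin da db) e2).
 assert (Hd0 : 0 < d0) by (repeat apply Rmin_glb_lt; lra).
 assert (Hd0a : d0 <= da) by (unfold d0; eapply Rle_trans; [apply Rmin_l|apply Rmin_l]).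
 assert (Hd0b : d0 <= db) by (unfold d0; eapply Rle_trans; [apply Rmin_l|apply Rmin_r]).
 assert (Hd0c : d0 <= e2) by (unfold d0; apply Rmin_r).
 set (y0 := Rmin (1/2) (d0 / (4 * e2))).
 assert (Hy0 : 0 < y0). { apply Rmin_glb_lt. lra. apply Rdiv_lt_0_compat; lra. }
 assert (Hy0a := Rmin_l (1/2) (d0 / (4 * e2))). assert (Hy0b := Rmin_r (1/2) (d0 / (4 * e2))). fold y0 in Hy0a, Hy0b.
 destruct (pow_lt_1_zero lam ltac:(rewrite Rabs_right; lra) y0 Hy0) as [Nl HNl].
 destruct (Hmix (fun y => d x0 y < d0/4) (fun y => d x0 y < d0/4)) as [Nm HNm];
   try apply ball_open; auto; try (exists x0; rewrite (dxx d Hm); lra).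
 set (N := Nat.max (Nat.max Nm Nl) 1).
 destruct (HNm N ltac:(unfold N; lia)) as [x [Hx1 Hx2]].
 assert (HN1 : (1 <= N)%nat) by (unfold N; lia).
 assert (HlN : lam ^ N < y0).
 { specialize (HNl N ltac:(unfold N; lia)). rewrite Rabs_right in HNl; auto. apply Rle_ge, pow_le; lra. }
 assert (HpN : 0 <= lam ^ N) by (apply pow_le; lra).
 assert (HlNe : lam ^ N * e2 < d0 / 2).
 { assert (lam ^ N * e2 < d0 / (4 * e2) * e2) by (apply Rmult_lt_compat_r; lra).
   replace (d0 / (4 * e2) * e2) with (d0/4) in H0 by (field; lra). lra. }
 set (y := Nat.iter N f x).
 assert (Hxy : d x y < d0 / 2).
 { pose proof (dtri d Hm x x0 y). rewrite (dsym d Hm x x0) in H0. unfold y in *. lra. }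
 destruct (back_half H e2 d0 N x) as [u [Hu1 Hu2]]; auto; try lra.
 { intros a b Hab. apply Huba. lra. }
 assert (Hgy : Nat.iter N g y = x).
 { unfold y. rewrite (iter_cancel g f Hgf N N) by lia. rewrite Nat.sub_diag. reflexivity. }
 destruct (back_half Hd e2 d0 N y) as [s [Hs1 Hs2]]; auto; try lra.
 { intros a b Hab. apply Hubb. lra. }
 { rewrite Hgy, (dsym d Hm). lra. }
 rewrite Hgy in Hs2. fold y in Hu2.
 set (K := 7 * e2 + d0 / 2) in *.
 assert (Hsu : d s u < d2).
 { pose proof (dtri d Hm s y u). pose proof (dtri d Hm y x u). rewrite (dsym d Hm s y) in H0.
   rewrite (dsym d Hm y x) in H1. lra. }
 set (p := br s u).
 assert (Hsp : d s p < e1) by (apply Hub2; lra).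
 assert (Hpu : d p u <= 2 * e1).
 { pose proof (dtri d Hm p s u). rewrite (dsym d Hm p s) in H0. lra. }
 assert (Hsp2 : br s p = p) by (unfold p in *; apply B3; lra).
 assert (Hpu2 : br p u = p) by (unfold p in *; apply B4; lra).
 assert (Fw : forall j, d (Nat.iter j f p) (Nat.iter (j mod N) f x) <= e1 + K).
 { intros j. destruct (stable_iter H j s p) as [S1 _]; [lra|auto|].
   assert (Hpj : 0 <= lam ^ j <= 1) by (apply powle1; lra).
   pose proof (dtri d Hm (Nat.iter j f p) (Nat.iter j f s) (Nat.iter (j mod N) f x)).
   pose proof (dsym d Hm (Nat.iter j f p) (Nat.iter j f s)). specialize (Hs2 j).
   assert (lam ^ j * d s p <= e1) by (pose proof (dpos d Hm s p); nra). lra. }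
 assert (Bw : forall j, d (Nat.iter j g p) (Nat.iter (j mod N) g y) <= 2 * e1 + K).
 { intros j. destruct (stable_iter Hd j u p) as [S1 _]; [rewrite (dsym d Hm); lra|exact Hpu2|].
   assert (Hpj : 0 <= lam ^ j <= 1) by (apply powle1; lra).
   pose proof (dtri d Hm (Nat.iter j g p) (Nat.iter j g u) (Nat.iter (j mod N) g y)).
   pose proof (dsym d Hm (Nat.iter j g p) (Nat.iter j g u)). specialize (Hu2 j).
   assert (lam ^ j * d u p <= 2 * e1) by (pose proof (dpos d Hm u p); rewrite (dsym d Hm u p); nra). lra. }
 assert (HK : 4 * e1 + 2 * K < c) by (unfold K; lra).
 assert (Fw2 : forall j, d (Nat.iter j f p) (Nat.iter j f (Nat.iter N f p)) < c).
 { intros j. rewrite <- Nat.iter_add.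
   assert (E : ((j + N) mod N = j mod N)%nat).
   { replace (j + N)%nat with (j + 1 * N)%nat by lia. apply Nat.Div0.mod_add. }
   pose proof (Fw j). pose proof (Fw (j + N)%nat). rewrite E in H1.
   pose proof (dtri d Hm (Nat.iter j f p) (Nat.iter (j mod N) f x) (Nat.iter (j + N) f p)).
   rewrite (dsym d Hm (Nat.iter (j mod N) f x)) in H2. lra. }
 exists p, N. split; auto. symmetry. apply Hexp; auto.
 intros j. destruct (Nat.eq_dec j 0) as [->|Hj0].
 { exact (Fw2 0%nat). }
 destruct (lt_dec j N) as [HjN|HjN].
 - rewrite (iter_cancel g f Hgf j N) by lia.
   pose proof (Bw j). rewrite Nat.mod_small in H0 by lia. unfold y in H0.
   rewrite (iter_cancel g f Hgf j N) in H0 by lia.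
   pose proof (Fw (N - j)%nat). rewrite Nat.mod_small in H1 by lia.
   pose proof (dtri d Hm (Nat.iter j g p) (Nat.iter (N - j) f x) (Nat.iter (N - j) f p)).
   rewrite (dsym d Hm (Nat.iter (N - j) f x)) in H2. lra.
 - set (i := (j - N)%nat). assert (Hji : j = (i + N)%nat) by (unfold i; lia).
   assert (E1 : Nat.iter j g (Nat.iter N f p) = Nat.iter i g p).
   { rewrite Hji, Nat.iter_add, (iter_cancel g f Hgf N N) by lia. rewrite Nat.sub_diag. reflexivity. }
   rewrite E1.
   assert (E : (j mod N = i mod N)%nat).
   { rewrite Hji. replace (i + N)%nat with (i + 1 * N)%nat by lia. apply Nat.Div0.mod_add. }
   pose proof (Bw j). rewrite E in H0.
   pose proof (Bw i).
   pose proof (dtri d Hm (Nat.iter j g p) (Nat.iter (i mod N) g y) (Nat.iter i g p)).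
   pose proof (dsym d Hm (Nat.iter (i mod N) g y) (Nat.iter i g p)). lra.
Qed.

Lemma finmin n (P : nat -> R -> Prop) :
  (forall i r r', 0 < r' <= r -> P i r -> P i r') ->
  (forall i, (i <= n)%nat -> exists r, 0 < r /\ P i r) ->
  exists r, 0 < r /\ forall i, (i <= n)%nat -> P i r.
Proof.
 intros Hmon. induction n; intros Hex.
 - destruct (Hex 0%nat (le_n 0)) as [r [Hr HP]]. exists r. split; auto. intros i Hi.
   assert (i = 0%nat) by lia. subst; auto.
 - destruct IHn as [r1 [Hr1 HP1]]. { intros i Hi; apply Hex; lia. }
   destruct (Hex (S n) (le_n _)) as [r2 [Hr2 HP2]].
   exists (Rmin r1 r2). split. apply Rmin_glb_lt; lra.
   intros i Hi. destruct (Nat.eq_dec i (S n)) as [->|Hne].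
   + apply (Hmon _ r2). split. apply Rmin_glb_lt; lra. apply Rmin_r. auto.
   + apply (Hmon _ r1). split. apply Rmin_glb_lt; lra. apply Rmin_l. apply HP1; lia.
Qed.

Lemma fix_finite {T d f g eps lam br} (H : @SS T d f g eps lam br) (N : nat) :
  (1 <= N)%nat ->
  exists P : list T, forall q, In q P <-> Nat.iter N f q = q.
Proof.
 intros HN.
 pose proof H as H'. destruct H' as [Hm Hc Hf Hg Hgf Hfg He Hl [B1 [B2 [B3 [B4 [B5 [B6 B7]]]]]]].
 pose proof (SS_dual _ _ _ _ _ _ H) as Hd.
 destruct (UB H (eps/2)) as [del [Hdel [Hdle Hub]]]. lra.
 set (d1 := Rmin del (eps/2)).
 assert (Hd1 : 0 < d1) by (apply Rmin_glb_lt; lra).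
 assert (Hd1a := Rmin_l del (eps/2)). assert (Hd1b := Rmin_r del (eps/2)). fold d1 in Hd1a, Hd1b.
 assert (HlN : 0 <= lam ^ N < 1) by (apply pow_lt_1_compat; lra || lia).
 assert (Uniq : forall p q, Nat.iter N f p = p -> Nat.iter N f q = q ->
   (forall i, (i <= N)%nat -> d (Nat.iter i f p) (Nat.iter i f q) < d1) -> p = q).
 { intros p q Hp Hq Hpq.
   assert (H0 : d p q < del) by (specialize (Hpq 0%nat ltac:(lia)); simpl in Hpq; lra).
   set (z := br p q).
   assert (Hz : d p z < eps/2) by (apply Hub; auto).
   assert (Hzf : Nat.iter N f z = z).
   { unfold z. rewrite (comm_iter H). rewrite Hp, Hq; auto. intros i Hi. specialize (Hpq i Hi). lra. }
   assert (Hz2 : br p z = z) by (unfold z in *; apply B3; lra).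
   destruct (stable_iter H N p z) as [S1 _]; [lra|auto|]. rewrite Hp, Hzf in S1.
   assert (E1 : d p z = 0) by (pose proof (dpos d Hm p z); nra).
   assert (Hzq : d z q <= eps).
   { pose proof (dtri d Hm z p q). rewrite (dsym d Hm z p) in H1. lra. }
   assert (Hz3 : br z q = z) by (unfold z in *; apply B4; lra).
   destruct (stable_iter Hd N q z) as [S2 _]; [rewrite (dsym d Hm); lra|exact Hz3|].
   assert (Gq : forall w, Nat.iter N f w = w -> Nat.iter N g w = w).
   { intros w Hw. rewrite <- Hw at 1. rewrite (iter_cancel g f Hgf N N) by lia. rewrite Nat.sub_diag. reflexivity. }
   rewrite (Gq q Hq), (Gq z Hzf) in S2.
   assert (E2 : d q z = 0) by (pose proof (dpos d Hm q z); nra).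
   apply (deq d Hm) in E1. apply (deq d Hm) in E2. congruence. }
 set (U := fun x y => forall i, (i <= N)%nat -> d (Nat.iter i f x) (Nat.iter i f y) < d1 / 2).
 destruct (Hc T U) as [l Hl'].
 - intros x y Hy.
   destruct (finmin N (fun i r => forall z, d y z < r -> d (Nat.iter i f x) (Nat.iter i f z) < d1 / 2)) as [r [Hr HP]].
   + intros i r r' Hr' HP z Hz. apply HP. lra.
   + intros i Hi. destruct (cont_iter d f Hf i y (d1/2 - d (Nat.iter i f x) (Nat.iter i f y))) as [r [Hr Hc']].
     { specialize (Hy i Hi). lra. }
     exists r. split; auto. intros z Hz. specialize (Hc' z Hz).
     pose proof (dtri d Hm (Nat.iter i f x) (Nat.iter i f y) (Nat.iter i f z)). lra.
   + exists r. split; auto. intros z Hz i Hi. apply HP; auto.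
 - intros x. exists x. intros i Hi. rewrite (dxx d Hm). lra.
 - set (Fx := fun x p => Nat.iter N f p = p /\ U x p).
   set (ch := fun x => epsilon (inhabits x) (Fx x)).
   set (good := fun x => if excluded_middle_informative (exists p, Fx x p) then true else false).
   exists (map ch (filter good l)). intros q. split.
   + intros Hq. apply in_map_iff in Hq. destruct Hq as [x [<- Hx]]. apply filter_In in Hx. destruct Hx as [_ Hg'].
     unfold good in Hg'. destruct (excluded_middle_informative (exists p, Fx x p)) as [Hex|]; [|discriminate].
     apply (epsilon_spec (inhabits x) (Fx x) Hex).
   + intros Hq. destruct (Hl' q) as [x [Hx HU]].
     assert (Hex : exists p, Fx x p) by (exists q; split; auto).
     assert (Hch := epsilon_spec (inhabits x) (Fx x) Hex). fold (ch x) in Hch. destruct Hch as [Hc1 Hc2].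
     assert (ch x = q).
     { apply Uniq; auto. intros i Hi. specialize (Hc2 i Hi). specialize (HU i Hi).
       pose proof (dtri d Hm (Nat.iter i f (ch x)) (Nat.iter i f x) (Nat.iter i f q)).
       pose proof (dsym d Hm (Nat.iter i f (ch x)) (Nat.iter i f x)). lra. }
     rewrite <- H0. apply in_map. apply filter_In. split; auto.
     unfold good. destruct (excluded_middle_informative (exists p, Fx x p)); auto.
Qed.

Lemma act_iter {X G} (phi : X -> X) (act : G -> X -> X) (Hc : forall g x, act g (phi x) = phi (act g x)) g :
  forall n x, act g (Nat.iter n phi x) = Nat.iter n phi (act g x).
Proof. induction n; intros x; simpl; auto. rewrite Hc, IHn. reflexivity. Qed.

Theorem lemma3p5 (X : Type) (d : X -> X -> R) (phi : X -> X)
  (G : Type) (mul : G -> G -> G) (e : G) (inv : G -> G) (act : G -> X -> X) :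
  is_smale_space d phi -> is_mixing d phi ->
  is_group mul e inv -> is_action d phi mul e act -> is_effective e act ->
  exists P : list X,
    P <> nil /\
    (forall p, In p P -> is_periodic phi p) /\
    (forall p, In p P -> In (phi p) P) /\
    (forall q, In q P -> exists p, In p P /\ phi p = q) /\
    (forall g p, In p P -> In (act g p) P).
Proof.
 intros [Hm [Hc [Hinf [Hf [phii [Hgf [Hfg [Hg [eps [lam [br [He [Hl Hb]]]]]]]]]]]]] Hmix _ [_ [_ [_ Hact]]] _.
 assert (H : SS d phi phii eps lam br) by (split; auto).
 assert (x0 : exists x0 : X, True).
 { apply NNPP; intro Hn. apply Hinf. exists nil. intros x. apply Hn. exists x; auto. }
 destruct x0 as [x0 _].
 destruct (exists_periodic H x0 Hmix) as [p0 [N [HN Hp0]]].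
 destruct (fix_finite H N HN) as [P HP].
 exists P. split; [|split; [|split; [|split]]].
 - intros E. apply (proj2 (HP p0)) in Hp0. rewrite E in Hp0. contradiction.
 - intros p Hp. exists N. split; auto. apply HP; auto.
 - intros p Hp. apply HP. rewrite Nat.iter_swap. f_equal. apply HP; auto.
 - intros q Hq. exists (phii q). split; [|apply Hfg]. apply HP.
   apply HP in Hq. rewrite <- (Hgf (Nat.iter N phi (phii q))). rewrite <- Nat.iter_swap. rewrite Hfg, Hq. reflexivity.
 - intros g p Hp. apply HP. apply HP in Hp. rewrite <- act_iter; auto. rewrite Hp. reflexivity.
Qed.
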